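(* Under Weak Ordering, in the limit $m\to\infty$, $\Pr[B_0]=2/3$ and $\Pr[B_\gamma]=2^{-\gamma}/3$ for every integer $\gamma>0$.
   Context: Fix $m\ge 1$. A random program is a sequence $x_1,\dots,x_{m+2}$ of memory operations, each with a type in $\{\mathrm{LD},\mathrm{ST}\}$: $x_1,\dots,x_m$ have i.i.d. types, each $\mathrm{ST}$ with probability $1/2$ and $\mathrm{LD}$ with probability $1/2$; $x_{m+1}$ (the critical load) has type $\mathrm{LD}$ and $x_{m+2}$ (the critical store) has type $\mathrm{ST}$. The initial order is $S_0=(x_1,\dots,x_{m+2})$. A memory model is specified by the set of ordered type pairs $(\tau_1,\tau_2)$ for which an instruction of type $\tau_2$ may be moved ahead of an immediately preceding instruction of type $\tau_1$: Sequential Consistency (SC) allows no pair; Total Store Order (TSO) allows only the pair $(\mathrm{ST},\mathrm{LD})$ (a load may move ahead of a preceding store); Weak Ordering (WO) allows all four pairs. The settling process runs rounds $r=1,\dots,m+2$. Before round $r$, the current order $S_{r-1}$ consists of $x_1,\dots,x_{r-1}$ in some order in positions $1,\dots,r-1$, followed by $x_r,\dots,x_{m+2}$ in positions $r,\dots,m+2$. In round $r$, instruction $x_r$ (starting at position $r$) repeatedly attempts to swap with the instruction immediately preceding it in the current order: the attempt fails automatically if the pair (type of the preceding instruction, type of $x_r$) is not allowed by the memory model, or if $x_r$ is the critical store and the preceding instruction is the critical load; otherwise the attempt succeeds independently with probability $1/2$. The round ends when an attempt fails or $x_r$ reaches position $1$; the resulting order is $S_r$. The final order is $S_{m+2}$.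 For $\gamma\ge 0$, $B_\gamma$ is the event that in $S_{m+2}$ exactly $\gamma$ instructions lie strictly between the critical load and the critical store. *)

(* Defs.v *)
From Stdlib Require Import Reals List Arith Bool.
Import ListNotations.
Open Scope R_scope.

Inductive ty := LD | ST.

(* A memory model: [M t1 t2 = true] iff an instruction of type t2 may be
   moved ahead of an immediately preceding instruction of type t1. *)
Definition model := ty -> ty -> bool.
Definition SC : model := fun _ _ => false.
Definition TSO : model := fun a b =>
  match a, b with ST, LD => true | _, _ => false end.
Definition WO : model := fun _ _ => true.

Definition dist (A : Type) := list (R * A).
Definition dret {A} (a : A) : dist A := [(1, a)].
Definition dbind {A B} (d : dist A) (f : A -> dist B) : dist B :=
  flat_map (fun pa => map (fun qb => (fst pa * fst qb, snd qb)) (f (snd pa))) d.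
Definition dmix {A} (d1 d2 : dist A) : dist A :=
  map (fun p => (/2 * fst p, snd p)) d1 ++ map (fun p => (/2 * fst p, snd p)) d2.
Definition dprob {A} (P : A -> bool) (d : dist A) : R :=
  fold_right Rplus 0 (map (fun p => if P (snd p) then fst p else 0) d).

(* Instructions are labelled 1..m+2 (x_i is labelled i); [bs] lists the
   types of x_1..x_m; x_{m+1} is LD (critical load), x_{m+2} is ST
   (critical store). *)
Definition typ (m : nat) (bs : list ty) (i : nat) : ty :=
  if (i <=? m)%nat then nth (i - 1) bs LD
  else if (i =? m + 1)%nat then LD else ST.

(* x moves left: [prev] is the part of the order before x, reversed
   (nearest instruction first), [post] the part after x. *)
Fixpoint climb (ok : nat -> bool) (prev : list nat) (x : nat) (post : list nat)
  : dist (list nat) :=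
  match prev with
  | [] => dret (x :: post)
  | y :: prev' =>
      if ok y
      then dmix (climb ok prev' x (y :: post)) (dret (rev prev ++ x :: post))
      else dret (rev prev ++ x :: post)
  end.

(* Round r: the instruction at position r (1-based) settles. *)
Definition round (M : model) (m : nat) (bs : list ty) (r : nat) (S : list nat)
  : dist (list nat) :=
  let x := nth (r - 1) S 0%nat in
  let ok (y : nat) :=
    M (typ m bs y) (typ m bs x) && negb ((x =? m + 2)%nat && (y =? m + 1)%nat) in
  climb ok (rev (firstn (r - 1) S)) x (skipn r S).

Fixpoint settle (M : model) (m : nat) (bs : list ty) (rounds : list nat)
  (S : list nat) : dist (list nat) :=
  match rounds with
  | [] => dret S
  | r :: rs => dbind (round M m bs r S) (settle M m bs rs)
  end.

Fixpoint tylists (n : nat) : list (list ty) :=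
  match n with
  | O => [[]]
  | S n' => flat_map (fun l => [LD :: l; ST :: l]) (tylists n')
  end.

Definition program (m : nat) : dist (list ty) :=
  map (fun bs => ((/2) ^ m, bs)) (tylists m).

Definition final_order (M : model) (m : nat) : dist (list nat) :=
  dbind (program m)
    (fun bs => settle M m bs (seq 1 (m + 2)) (seq 1 (m + 2))).

Fixpoint pos (x : nat) (l : list nat) : nat :=
  match l with
  | [] => 0%nat
  | y :: l' => if (y =? x)%nat then 0%nat else S (pos x l')
  end.

Definition gap (m : nat) (S : list nat) : nat :=
  let i := pos (m + 1) S in
  let j := pos (m + 2) S in
  (Nat.max i j - Nat.min i j - 1)%nat.

Definition PrB (M : model) (m gamma : nat) : R :=
  dprob (fun S => (gap m S =? gamma)%nat) (final_order M m).

(* Main.v *)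
Require Import Defs.
From Stdlib Require Import Reals Lra Lia List Arith Bool.
Import ListNotations.
Open Scope R_scope.

Definition Ex {A} (d : Defs.dist A) (h : A -> R) : R :=
  fold_right Rplus 0 (map (fun p => fst p * h (snd p)) d).

Lemma Ex_nil {A} (h : A -> R) : Ex [] h = 0.
Proof. reflexivity. Qed.
Lemma Ex_cons {A} (p : R * A) d h : Ex (p :: d) h = fst p * h (snd p) + Ex d h.
Proof. reflexivity. Qed.

Lemma Ex_app {A} (d1 d2 : Defs.dist A) h : Ex (d1 ++ d2) h = Ex d1 h + Ex d2 h.
Proof. induction d1 as [|p d1 IH]; simpl app; [rewrite Ex_nil; ring|rewrite !Ex_cons, IH; ring]. Qed.

Lemma Ex_scale {A} c (d : Defs.dist A) h :
  Ex (map (fun p => (c * fst p, snd p)) d) h = c * Ex d h.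
Proof. induction d as [|p d IH]; simpl map; [rewrite Ex_nil; ring|rewrite !Ex_cons, IH; simpl; ring]. Qed.

Lemma Ex_dret {A} (a : A) h : Ex (dret a) h = h a.
Proof. unfold Ex, dret; simpl; ring. Qed.

Lemma Ex_dmix {A} (d1 d2 : Defs.dist A) h : Ex (dmix d1 d2) h = /2 * Ex d1 h + /2 * Ex d2 h.
Proof. unfold dmix. rewrite Ex_app, !Ex_scale. ring. Qed.

Lemma Ex_dbind {A B} (d : Defs.dist A) (f : A -> Defs.dist B) h :
  Ex (dbind d f) h = Ex d (fun a => Ex (f a) h).
Proof.
  induction d as [|p d IH]; [reflexivity|].
  unfold dbind in *; simpl flat_map. rewrite Ex_app, IH, Ex_cons, Ex_scale. reflexivity.
Qed.

Lemma Ex_ext_in {A} (d : Defs.dist A) h1 h2 :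
  (forall p, In p d -> h1 (snd p) = h2 (snd p)) -> Ex d h1 = Ex d h2.
Proof.
  induction d as [|p d IH]; intros H; [reflexivity|].
  rewrite !Ex_cons, H, IH; auto. intros; apply H; simpl; auto. simpl; auto.
Qed.

Lemma Ex_const {A} (d : Defs.dist A) c : Ex d (fun _ => c) = c * Ex d (fun _ => 1).
Proof. induction d as [|p d IH]; [rewrite !Ex_nil; ring| rewrite !Ex_cons, IH; ring]. Qed.

Lemma dprob_Ex {A} (P : A -> bool) d : dprob P d = Ex d (fun a => if P a then 1 else 0).
Proof.
  induction d as [|p d IH]; [reflexivity|].
  rewrite Ex_cons, <- IH. unfold dprob; simpl. destruct (P (snd p)); ring.
Qed.

Fixpoint geo (n : nat) (h : nat -> R) : R :=
  match n with
  | O => h O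
  | S n' => /2 * h O + /2 * geo n' (fun j => h (S j))
  end.

Lemma geo_ext_le n : forall f1 f2, (forall j, (j <= n)%nat -> f1 j = f2 j) -> geo n f1 = geo n f2.
Proof.
  induction n; intros f1 f2 H; simpl.
  - apply H; lia.
  - rewrite H by lia. f_equal. f_equal. apply IHn. intros; apply H; lia.
Qed.

Lemma geo_S_r n : forall h, geo (S n) h = geo n h + (/2)^(S n) * (h (S n) - h n).
Proof.
  induction n; intros h.
  - simpl. field.
  - change (geo (S (S n)) h) with (/2 * h O + /2 * geo (S n) (fun j => h (S j))).
    rewrite IHn. simpl geo. simpl pow. field.
Qed.


Lemma climb_mass ok q : forall x post, Ex (climb ok q x post) (fun _ => 1) = 1.
Proof.
  induction q as [|y q IH]; intros x post; cbn [climb].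
  - rewrite Ex_dret; reflexivity.
  - destruct (ok y); [rewrite Ex_dmix, IH, Ex_dret; field| rewrite Ex_dret; reflexivity].
Qed.

Lemma in_dmix {A} (d1 d2 : Defs.dist A) p :
  In p (dmix d1 d2) -> exists p', snd p' = snd p /\ (In p' d1 \/ In p' d2).
Proof.
  unfold dmix. intros H. apply in_app_or in H as [H|H]; apply in_map_iff in H as [p' [<- Hp']];
  exists p'; simpl; auto.
Qed.

Lemma climb_supp ok q : forall x post p, In p (climb ok q x post) ->
  exists l, snd p = l ++ post /\ length l = S (length q) /\
            (forall z, In z l -> z = x \/ In z q).
Proof.
  induction q as [|y q IH]; intros x post p Hp; cbn [climb] in Hp.
  - destruct Hp as [<-|[]]. exists [x]. simpl. repeat split; auto.
    intros z [->|[]]; auto.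
  - assert (Hret : snd p = rev (y :: q) ++ x :: post ->
      exists l, snd p = l ++ post /\ length l = S (length (y :: q)) /\
            (forall z, In z l -> z = x \/ In z (y :: q))).
    { intros ->. exists (rev (y :: q) ++ [x]).
      split; [rewrite <- app_assoc; reflexivity|split].
      rewrite length_app, length_rev. simpl; lia.
      intros z Hz. apply in_app_or in Hz as [Hz|[->|[]]]; auto.
      right. apply in_rev; auto. }
    destruct (ok y); [|destruct Hp as [<-|[]]; apply Hret; reflexivity].
    apply in_dmix in Hp as [p' [Hs [H1|H1]]].
    + destruct (IH _ _ _ H1) as [l [E1 [E2 E3]]].
      exists (l ++ [y]). rewrite <- Hs, E1, <- app_assoc. repeat split; auto.
      rewrite length_app, E2; simpl; lia.
      intros z Hz. apply in_app_or in Hz as [Hz|[->|[]]].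
      destruct (E3 _ Hz); simpl; auto. simpl; auto.
    + apply Hret. destruct H1 as [<-|[]]. rewrite <- Hs. reflexivity.
Qed.

Lemma climb_E ok q1 : forall rest x post h,
  (forall y, In y q1 -> ok y = true) ->
  (match rest with [] => True | y :: _ => ok y = false end) ->
  Ex (climb ok (q1 ++ rest) x post) h =
  geo (length q1) (fun j => h (rev (skipn j (q1 ++ rest)) ++ x :: rev (firstn j (q1 ++ rest)) ++ post)).
Proof.
  induction q1 as [|y q1 IH]; intros rest x post h Hok Hr.
  - simpl app. destruct rest as [|y r]; cbn [climb].
    + rewrite Ex_dret. reflexivity.
    + rewrite Hr, Ex_dret. reflexivity.
  - simpl app. cbn [climb]. rewrite Hok by (simpl; auto).
    rewrite Ex_dmix, Ex_dret, IH; auto.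
    2: intros; apply Hok; simpl; auto.
    simpl length. cbn [geo]. rewrite Rplus_comm. f_equal.
    f_equal. apply geo_ext_le. intros j _. simpl skipn. simpl firstn. simpl rev.
    rewrite <- app_assoc. reflexivity.
Qed.

Lemma In_firstn_l {A} n (l : list A) x : In x (firstn n l) -> In x l.
Proof. intros H. rewrite <- (firstn_skipn n l). apply in_or_app; auto. Qed.
Lemma In_skipn_l {A} n (l : list A) x : In x (skipn n l) -> In x l.
Proof. intros H. rewrite <- (firstn_skipn n l). apply in_or_app; auto. Qed.

Lemma pos_app x l1 l2 : ~ In x l1 -> Defs.pos x (l1 ++ x :: l2) = length l1.
Proof.
  induction l1 as [|a l1 IH]; intros H; simpl.
  - rewrite Nat.eqb_refl; reflexivity.
  - destruct (Nat.eqb_spec a x). subst; exfalso; apply H; simpl; auto.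
    rewrite IH; auto. intro; apply H; simpl; auto.
Qed.

Lemma gap_form m a c d : ~ In (m+1)%nat a -> ~ In (m+2)%nat a -> ~ In (m+2)%nat c ->
  gap m (a ++ (m+1)%nat :: c ++ (m+2)%nat :: d) = length c.
Proof.
  intros H1 H2 H3. unfold gap. rewrite pos_app by auto.
  replace (a ++ (m+1)%nat :: c ++ (m+2)%nat :: d) with ((a ++ (m+1)%nat :: c) ++ (m+2)%nat :: d)
    by (rewrite <- app_assoc; reflexivity).
  rewrite pos_app. rewrite length_app. simpl. lia.
  intro H. apply in_app_or in H as [H|[H|H]]; auto. lia.
Qed.

Definition hind (m g : nat) (S : list nat) : R := if (gap m S =? g)%nat then 1 else 0.
Definition val (m g : nat) : R :=
  geo m (fun k => geo k (fun j => if (k - j =? g)%nat then 1 else 0)).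

Lemma base m g bs p : length p = m -> (forall y, In y p -> (y <= m)%nat) ->
  Ex (settle WO m bs [(m+1)%nat; (m+2)%nat] (p ++ [(m+1)%nat; (m+2)%nat])) (hind m g) = val m g.
Proof.
  intros Hlen Hp. cbn [settle]. rewrite Ex_dbind. unfold round at 1.
  replace (m + 1 - 1)%nat with m by lia.
  assert (Hn : nth m (p ++ [(m+1)%nat; (m+2)%nat]) 0%nat = (m+1)%nat)
    by (rewrite <- Hlen; apply nth_middle).
  assert (Hf : firstn m (p ++ [(m+1)%nat; (m+2)%nat]) = p)
    by (rewrite <- Hlen, firstn_app, Nat.sub_diag, firstn_all; simpl; apply app_nil_r).
  assert (Hs : skipn (m+1) (p ++ [(m+1)%nat; (m+2)%nat]) = [(m+2)%nat])
    by (rewrite skipn_app, <- Hlen, skipn_all2 by lia; replace (length p + 1 - length p)%nat with 1%nat by lia; reflexivity).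
  rewrite Hn, Hf, Hs.
  rewrite <- (app_nil_r (rev p)).
  rewrite climb_E; [| | exact I].
  2:{ intros y _. unfold WO. replace (m + 1 =? m + 2)%nat with false
        by (symmetry; apply Nat.eqb_neq; lia). reflexivity. }
  rewrite app_nil_r, length_rev, Hlen. unfold val. apply geo_ext_le. intros k Hk.
  rewrite Ex_dbind.
  rewrite (Ex_ext_in _ _ (hind m g)) by (intros; cbn [settle]; apply Ex_dret).
  set (a_ := rev (skipn k (rev p))). set (b_ := rev (firstn k (rev p))).
  assert (Hb : length b_ = k) by (unfold b_; rewrite length_rev, length_firstn, length_rev; lia).
  assert (Ha : length a_ = (m - k)%nat) by (unfold a_; rewrite length_rev, length_skipn, length_rev; lia).
  assert (Hpa : forall y, In y a_ -> (y <= m)%nat)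
    by (intros y Hy; apply Hp; unfold a_ in Hy; apply in_rev, In_skipn_l, in_rev in Hy; auto).
  assert (Hpb : forall y, In y b_ -> (y <= m)%nat)
    by (intros y Hy; apply Hp; unfold b_ in Hy; apply in_rev, In_firstn_l, in_rev in Hy; auto).
  replace (a_ ++ (m+1)%nat :: b_ ++ [(m+2)%nat]) with ((a_ ++ (m+1)%nat :: b_) ++ [(m+2)%nat])
    by (rewrite <- app_assoc; reflexivity).
  set (A := a_ ++ (m+1)%nat :: b_).
  assert (HA : length A = (m+1)%nat) by (unfold A; rewrite length_app; simpl; lia).
  unfold round. replace (m + 2 - 1)%nat with (m+1)%nat by lia.
  assert (Hn2 : nth (m+1) (A ++ [(m+2)%nat]) 0%nat = (m+2)%nat)
    by (rewrite <- HA; apply nth_middle).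
  assert (Hf2 : firstn (m+1) (A ++ [(m+2)%nat]) = A)
    by (rewrite <- HA, firstn_app, Nat.sub_diag, firstn_all; simpl; apply app_nil_r).
  assert (Hs2 : skipn (m+2) (A ++ [(m+2)%nat]) = [])
    by (apply skipn_all2; rewrite length_app; simpl; lia).
  rewrite Hn2, Hf2, Hs2.
  assert (HrA : rev A = rev b_ ++ (m+1)%nat :: rev a_)
    by (unfold A; rewrite rev_app_distr; simpl; rewrite <- app_assoc; reflexivity).
  rewrite HrA. rewrite climb_E.
  2:{ intros y Hy. apply in_rev in Hy. specialize (Hpb _ Hy). unfold WO.
      replace (y =? m + 1)%nat with false by (symmetry; apply Nat.eqb_neq; lia).
      rewrite andb_false_r. reflexivity. }
  2:{ unfold WO. rewrite !Nat.eqb_refl. reflexivity. }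
  rewrite length_rev, Hb. apply geo_ext_le. intros j Hj.
  rewrite skipn_app, firstn_app, length_rev, Hb.
  replace (j - k)%nat with 0%nat by lia. simpl skipn. simpl firstn.
  rewrite !app_nil_r, rev_app_distr. simpl rev. rewrite rev_involutive.
  rewrite <- !app_assoc. simpl app.
  unfold hind. rewrite gap_form.
  - rewrite length_rev, length_skipn, length_rev, Hb. reflexivity.
  - intro H; specialize (Hpa _ H); lia.
  - intro H; specialize (Hpa _ H); lia.
  - intro H; apply in_rev, In_skipn_l, in_rev in H; specialize (Hpb _ H); lia.
Qed.

Lemma main_settle m g bs k : forall p, (length p + k = m)%nat -> (forall y, In y p -> (y <= m)%nat) ->
  Ex (settle WO m bs (seq (length p + 1) (k+2)) (p ++ seq (length p + 1) (k+2))) (hind m g) = val m g.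
Proof.
  induction k as [|k IH]; intros p Hl Hp.
  - simpl (seq _ (0+2)). replace (S (length p + 1)) with (m+2)%nat by lia.
    replace (length p + 1)%nat with (m+1)%nat by lia. apply base; auto. lia.
  - replace (S k + 2)%nat with (S (k+2)) by lia. cbn [seq settle].
    rewrite Ex_dbind. unfold round at 1.
    replace (length p + 1 - 1)%nat with (length p) by lia.
    rewrite nth_middle.
    assert (Hf : firstn (length p) (p ++ (length p + 1)%nat :: seq (S (length p + 1)) (k + 2)) = p)
      by (rewrite firstn_app, Nat.sub_diag, firstn_all; simpl; apply app_nil_r).
    assert (Hs : skipn (length p + 1) (p ++ (length p + 1)%nat :: seq (S (length p + 1)) (k + 2))
                 = seq (S (length p + 1)) (k + 2))
      by (rewrite skipn_app, skipn_all2 by lia; replace (length p + 1 - length p)%nat with 1%nat by lia; reflexivity).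
    rewrite Hf, Hs.
    rewrite (Ex_ext_in _ _ (fun _ => val m g)).
    + rewrite Ex_const, climb_mass. ring.
    + intros pr Hpr. apply climb_supp in Hpr as [l [E1 [E2 E3]]].
      rewrite E1. rewrite length_rev in E2.
      replace (S (length p + 1)) with (length l + 1)%nat by lia.
      apply IH. lia.
      intros y Hy. destruct (E3 _ Hy) as [->|Hy']. lia. apply in_rev in Hy'; auto.
Qed.

Lemma length_tylists n : length (tylists n) = (2 ^ n)%nat.
Proof.
  induction n; simpl; auto.
  assert (H : forall l : list (list ty), length (flat_map (fun l => [LD :: l; ST :: l]) l) = (2 * length l)%nat).
  { induction l; simpl; auto. rewrite IHl. lia. }
  rewrite H, IHn. lia.
Qed.

Lemma program_mass m : Ex (program m) (fun _ => 1) = 1.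
Proof.
  unfold program.
  assert (H : forall (w : R) (l : list (list ty)), Ex (map (fun bs => (w, bs)) l) (fun _ => 1) = w * INR (length l)).
  { induction l; [unfold Ex; simpl; ring|]. simpl map. rewrite Ex_cons, IHl.
    simpl length. rewrite S_INR. simpl. ring. }
  rewrite H, length_tylists, pow_INR. simpl INR.
  rewrite <- Rpow_mult_distr. replace (/2 * (1+1)) with 1 by field. apply pow1.
Qed.

Lemma PrB_val m g : PrB WO m g = val m g.
Proof.
  unfold PrB, final_order. rewrite dprob_Ex, Ex_dbind.
  rewrite (Ex_ext_in _ _ (fun _ => val m g)).
  - rewrite Ex_const, program_mass. ring.
  - intros pr _. change (fun a => if (gap m a =? g)%nat then 1 else 0) with (hind m g).
    pose proof (main_settle m g (snd pr) m [] eq_refl ltac:(intros y [])) as H.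
    simpl length in H. simpl app in H. exact H.
Qed.

Definition Ig (g n : nat) : R :=
  if (g =? 0)%nat then (/2)^n else if (g <=? n)%nat then (/2)^(n - g + 1) else 0.

Lemma inner g n : geo n (fun j => if (n - j =? g)%nat then 1 else 0) = Ig g n.
Proof.
  induction n.
  - simpl. unfold Ig. destruct g; simpl; ring.
  - cbn [geo]. change (geo n (fun j => if (S n - S j =? g)%nat then 1 else 0))
      with (geo n (fun j => if (n - j =? g)%nat then 1 else 0)).
    rewrite IHn. unfold Ig. rewrite Nat.sub_0_r.
    destruct (Nat.eqb_spec g 0).
    + subst. simpl. ring.
    + destruct (Nat.eqb_spec (S n) g).
      * subst. rewrite Nat.leb_refl, Nat.sub_diag.
        replace (S n <=? n)%nat with false by (symmetry; apply Nat.leb_gt; lia). simpl. ring.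
      * destruct (Nat.leb_spec g n).
        -- rewrite (proj2 (Nat.leb_le g (S n))) by lia.
           replace (S n - g + 1)%nat with (S (n - g + 1)) by lia. simpl. ring.
        -- rewrite (proj2 (Nat.leb_gt g (S n))) by lia. ring.
Qed.

Lemma val_Ig m g : val m g = geo m (Ig g).
Proof. unfold val. apply geo_ext_le. intros; apply inner. Qed.

Lemma q4 d : (/4)^d = (/2)^d * (/2)^d.
Proof. rewrite <- Rpow_mult_distr. f_equal. field. Qed.

Lemma val0 m : val m 0 = 2/3 + /3 * (/4)^m.
Proof.
  rewrite val_Ig. induction m.
  - simpl. unfold Ig. simpl. field.
  - rewrite geo_S_r, IHm. unfold Ig. simpl (0 =? 0)%nat. cbv iota.
    rewrite !q4. simpl pow. field.
Qed.

Lemma geo_zero n h : (forall j, (j <= n)%nat -> h j = 0) -> geo n h = 0.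
Proof.
  intros H. rewrite (geo_ext_le n h (fun _ => 0)) by auto. clear H.
  induction n; simpl; [reflexivity|].
  change (geo n (fun _ : nat => 0)) with (geo n (fun _ => 0)). rewrite IHn. ring.
Qed.

Lemma valpos g d : (0 < g)%nat -> val (g + d) g = (/2)^g * (/3 + /6 * (/4)^d).
Proof.
  intros Hg. rewrite val_Ig.
  assert (HI : forall n, Ig g n = if (g <=? n)%nat then (/2)^(n - g + 1) else 0).
  { intros n. unfold Ig. replace (g =? 0)%nat with false by (symmetry; apply Nat.eqb_neq; lia). reflexivity. }
  induction d.
  - rewrite Nat.add_0_r. destruct g as [|g0]; [lia|].
    rewrite geo_S_r, geo_zero.
    2:{ intros j Hj. rewrite HI. rewrite (proj2 (Nat.leb_gt (S g0) j)) by lia. reflexivity. }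
    rewrite !HI, Nat.leb_refl, (proj2 (Nat.leb_gt (S g0) g0)) by lia.
    rewrite Nat.sub_diag. simpl. field.
  - replace (g + S d)%nat with (S (g + d)) by lia.
    rewrite geo_S_r, IHd, !HI.
    rewrite (proj2 (Nat.leb_le g (S (g + d)))) by lia.
    rewrite (proj2 (Nat.leb_le g (g + d))) by lia.
    replace (S (g + d) - g + 1)%nat with (S (S d)) by lia.
    replace (g + d - g + 1)%nat with (S d) by lia.
    replace (S (g + d)) with (g + S d)%nat by lia. rewrite pow_add.
    rewrite !q4. simpl pow. field.
Qed.

Lemma cv_geo4 a b : Un_cv (fun n => a + b * (/4)^n) a.
Proof.
  intros eps He.
  assert (H4 : Rabs (/4) < 1) by (rewrite Rabs_pos_eq; lra).
  assert (Hb : 0 < Rabs b + 1) by (pose proof (Rabs_pos b); lra).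
  destruct (pow_lt_1_zero _ H4 (eps / (Rabs b + 1))) as [N HN].
  { apply Rdiv_lt_0_compat; lra. }
  exists N. intros n Hn. unfold R_dist.
  replace (a + b * (/4)^n - a) with (b * (/4)^n) by ring.
  rewrite Rabs_mult. specialize (HN n Hn).
  pose proof (Rabs_pos b). pose proof (Rabs_pos ((/4)^n)).
  apply Rle_lt_trans with ((Rabs b + 1) * Rabs ((/4)^n)).
  - nra.
  - apply Rmult_lt_reg_l with (/ (Rabs b + 1)). apply Rinv_0_lt_compat; lra.
    rewrite <- Rmult_assoc, Rinv_l by lra. unfold Rdiv in HN. lra.
Qed.

Lemma cv_shift u l g : Un_cv (fun d => u (g + d)%nat) l -> Un_cv u l.
Proof.
  intros H eps He. destruct (H eps He) as [N HN]. exists (g + N)%nat.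
  intros n Hn. replace n with (g + (n - g))%nat by lia. apply HN. lia.
Qed.

Lemma cv_ext u v l : Un_cv u l -> (forall n, u n = v n) -> Un_cv v l.
Proof. intros H E eps He. destruct (H eps He) as [N HN]. exists N. intros; rewrite <- E; auto. Qed.

Theorem theorem1 :
  Un_cv (fun m => PrB WO m 0) (2 / 3) /\
  (forall gamma : nat, (0 < gamma)%nat ->
     Un_cv (fun m => PrB WO m gamma) (/ 2 ^ gamma / 3)).
Proof.
  split.
  - apply (cv_ext _ _ _ (cv_geo4 (2/3) (/3))). intros n. rewrite PrB_val, val0. reflexivity.
  - intros g Hg. apply (cv_shift _ _ g).
    apply (cv_ext _ _ _ (cv_geo4 (/ 2 ^ g / 3) ((/2)^g * /6))). intros d.
    rewrite PrB_val, valpos by auto. rewrite pow_inv. field. apply pow_nonzero. lra.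
Qed.
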